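(* Fix an RWA-P instance (setting as in the context) and $\alpha,\beta>0$ with $\beta/\alpha>|R|(M-2)+2$, where $M=\max_{r\in R}\big(\max_{w\in W^r}B^r_w+\max_{p\in P^r}B^r_p\big)$. Let $B^r_{w_{\min}}=\min_{w\in W^r}B^r_w$ and $B^r_{p_{\min}}=\min_{p\in P^r}B^r_p$. If $$\rho>\beta(|R|+1)-\alpha\Big(1+\sum_{r\in R}\big(B^r_{w_{\min}}+B^r_{p_{\min}}\big)\Big),\qquad \rho>0,$$ then every minimizer over all binary vectors $(x,y)$ of $$Q(x,y)=f(x,y)+\rho\sum_{r}\Big(\sum_{w}x^r_w-\sum_{p}y^r_p\Big)^2+\rho\sum_r\Big(\sum_w x^r_w-1\Big)\Big(\sum_w x^r_w\Big)+\rho\!\!\sum_{(r,w,p)\in\mathcal C_1}\!\!x^r_wy^r_p+\rho\!\!\!\sum_{(r_1,r_2,w,p)\in\mathcal C_2}\!\!\!x^{r_1}_wy^{r_2}_p+\rho\!\!\!\sum_{(r_1,r_2,w_1,w_2)\in\mathcal C_3}\!\!\!x^{r_1}_{w_1}x^{r_2}_{w_2}+\rho\!\!\!\sum_{(r_1,r_2,p_1,p_2)\in\mathcal C_4}\!\!\!y^{r_1}_{p_1}y^{r_2}_{p_2}$$ is a feasible solution that minimizes $f$ over all feasible solutions.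
   Context: An RWA-P instance consists of: a directed graph $G=(V,E)$ (parallel arcs allowed) whose arcs are called links; a finite set $\Lambda$ of wavelengths; a finite set $R$ of requests, each with a source $s^r$ and distinct destination $t^r$; and for each $r$ nonempty finite sets $W^r$ (working) and $P^r$ (protection) of lightpaths, each lightpath $\ell$ being a directed $s^r$–$t^r$ path in $G$ with link set $E[\ell]$, length $B^r_\ell=|E[\ell]|\ge1$, and wavelength $\Lambda[\ell]\in\Lambda$. Conflict sets: $\mathcal C_1=\{(r,w,p): w\in W^r,p\in P^r, E[w]\cap E[p]\ne\emptyset\}$; $\mathcal C_2=\{(r_1,r_2,w,p): r_1\ne r_2, w\in W^{r_1}, p\in P^{r_2}, \Lambda[w]=\Lambda[p], E[w]\cap E[p]\ne\emptyset\}$; $\mathcal C_3=\{(r_1,r_2,w_1,w_2): w_i\in W^{r_i}, (r_1,w_1)\ne(r_2,w_2), \Lambda[w_1]=\Lambda[w_2], E[w_1]\cap E[w_2]\neq\emptyset\}$; $\mathcal C_4$ analogously for distinct protection lightpaths. A solution is binary $x=(x^r_w)$, $y=(y^r_p)$; feasible if for every $r$, $\sum_w x^r_w=\sum_p y^r_p$ and $\sum_w x^r_w\le1$, and for each tuple in $\mathcal C_1,\dots,\mathcal C_4$ the two corresponding variables sum to at most 1. $f(x,y)=\alpha\sum_r\big(\sum_wB^r_wx^r_w+\sum_pB^r_py^r_p\big)-\beta\sum_r\sum_w x^r_w$. *)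

(* Defs.v *)
From HB Require Import structures.
From mathcomp Require Import all_boot all_order all_algebra.
Set Implicit Arguments. Unset Strict Implicit. Unset Printing Implicit Defensive.
Import Order.TTheory GRing.Theory Num.Theory.

(* Data of an RWA-P instance.
   - [vert]/[link]: vertices and links (arcs) of the directed multigraph G;
     a link e goes from [ltail e] to [lhead e] (parallel arcs allowed).
   - [wavelength]: the finite set Lambda.
   - [request]: the finite set R; request r has source [src r], destination [dst r].
   - [wpath]: index set of all working-lightpath variables x^r_w, i.e. of the
     pairs (r, w) with w in W^r; [wreq w] is the request r, [wlinks w] is the
     lightpath as a sequence of links, [wlam w] its wavelength.  Thus
     W^r = [set w | wreq w == r].
   - [ppath], [preq], [plinks], [plam]: the same for protection lightpaths. *)
Record rwap := RWAP {
  vert : finType;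
  link : finType;
  ltail : link -> vert;
  lhead : link -> vert;
  wavelength : finType;
  request : finType;
  src : request -> vert;
  dst : request -> vert;
  wpath : finType;
  ppath : finType;
  wreq : wpath -> request;
  preq : ppath -> request;
  wlinks : wpath -> seq link;
  plinks : ppath -> seq link;
  wlam : wpath -> wavelength;
  plam : ppath -> wavelength }.

Section RWAP.
Variable I : rwap.

(* s is a (simple) directed path from a to b: a nonempty sequence of links
   e_1 ... e_n with tail e_1 = a, head e_i = tail e_{i+1}, head e_n = b,
   visiting pairwise distinct vertices. *)
Definition is_dipath (a b : vert I) (s : seq (link I)) : bool :=
  [&& s != [::],
      a :: map (@lhead I) s == rcons (map (@ltail I) s) b &
      uniq (a :: map (@lhead I) s)].

Definition wE (w : wpath I) : {set link I} := [set e in wlinks w].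
Definition pE (p : ppath I) : {set link I} := [set e in plinks p].
Definition Bw (w : wpath I) : nat := #|wE w|.
Definition Bp (p : ppath I) : nat := #|pE p|.

Definition wf_rwap : Prop :=
  [/\ forall r : request I, src r != dst r,
      forall r : request I, exists w : wpath I, wreq w = r,
      forall r : request I, exists p : ppath I, preq p = r,
      forall w : wpath I, is_dipath (src (wreq w)) (dst (wreq w)) (wlinks w) &
      forall p : ppath I, is_dipath (src (preq p)) (dst (preq p)) (plinks p)] /\
  [/\
      (* W^r and P^r are sets: distinct indices of a request are distinct lightpaths *)
      forall w1 w2 : wpath I, wreq w1 = wreq w2 -> wlinks w1 = wlinks w2 ->
        wlam w1 = wlam w2 -> w1 = w2 &
      forall p1 p2 : ppath I, preq p1 = preq p2 -> plinks p1 = plinks p2 ->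
        plam p1 = plam p2 -> p1 = p2].

Definition C1 (w : wpath I) (p : ppath I) : bool :=
  (wreq w == preq p) && (wE w :&: pE p != set0).
Definition C2 (w : wpath I) (p : ppath I) : bool :=
  [&& wreq w != preq p, wlam w == plam p & wE w :&: pE p != set0].
Definition C3 (w1 w2 : wpath I) : bool :=
  [&& w1 != w2, wlam w1 == wlam w2 & wE w1 :&: wE w2 != set0].
Definition C4 (p1 p2 : ppath I) : bool :=
  [&& p1 != p2, plam p1 == plam p2 & pE p1 :&: pE p2 != set0].

Definition Xsum (x : wpath I -> bool) (r : request I) : nat :=
  (\sum_(w | wreq w == r) x w)%N.
Definition Ysum (y : ppath I -> bool) (r : request I) : nat :=
  (\sum_(p | preq p == r) y p)%N.

Definition feasible (x : wpath I -> bool) (y : ppath I -> bool) : Prop :=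
  [/\ forall r, Xsum x r = Ysum y r &
      forall r, Xsum x r <= 1] /\
  [/\
      forall w p, C1 w p -> x w + y p <= 1,
      forall w p, C2 w p -> x w + y p <= 1,
      forall w1 w2, C3 w1 w2 -> x w1 + x w2 <= 1 &
      forall p1 p2, C4 p1 p2 -> y p1 + y p2 <= 1].

Definition Mmax : nat :=
  \max_(r : request I)
     (\max_(w | wreq w == r) Bw w + \max_(p | preq p == r) Bp p)%N.

(* minimum lengths; the default #|link I| bounds every B, so for nonempty
   W^r, P^r these are the true minima *)
Definition Bwmin (r : request I) : nat :=
  \big[minn/#|link I|]_(w | wreq w == r) Bw w.
Definition Bpmin (r : request I) : nat :=
  \big[minn/#|link I|]_(p | preq p == r) Bp p.

Local Open Scope ring_scope.

Definition fobj (R : realFieldType) (alpha beta : R)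
    (x : wpath I -> bool) (y : ppath I -> bool) : R :=
  alpha * (\sum_(r : request I)
             ((\sum_(w | wreq w == r) Bw w * x w)%N
              + (\sum_(p | preq p == r) Bp p * y p)%N)%:R)
  - beta * (\sum_(r : request I) (Xsum x r)%:R).

Definition Qobj (R : realFieldType) (alpha beta rho : R)
    (x : wpath I -> bool) (y : ppath I -> bool) : R :=
  fobj alpha beta x y
  + rho * (\sum_(r : request I) ((Xsum x r)%:R - (Ysum y r)%:R) ^+ 2)
  + rho * (\sum_(r : request I) ((Xsum x r)%:R - 1) * (Xsum x r)%:R)
  + rho * (\sum_(w : wpath I) \sum_(p : ppath I | C1 w p) (x w)%:R * (y p)%:R)
  + rho * (\sum_(w : wpath I) \sum_(p : ppath I | C2 w p) (x w)%:R * (y p)%:R)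
  + rho * (\sum_(w1 : wpath I) \sum_(w2 : wpath I | C3 w1 w2)
             (x w1)%:R * (x w2)%:R)
  + rho * (\sum_(p1 : ppath I) \sum_(p2 : ppath I | C4 p1 p2)
             (y p1)%:R * (y p2)%:R).

End RWAP.

(* Main.v *)
Require Import Defs.
From HB Require Import structures.
From mathcomp Require Import all_boot all_order all_algebra.
From mathcomp Require Import lra.
Import Order.TTheory GRing.Theory Num.Theory.
Local Open Scope ring_scope.

Definition hfun {R : realFieldType} (al be rho : R) (m n a b : nat) : R :=
  al * (a%:R * m%:R + b%:R * n%:R) - be * a%:R
  + rho * ((a%:R - b%:R)^+2 + (a%:R - 1) * a%:R).
Lemma hbound (R : realFieldType) (al be rho : R) (m n a b : nat) :
 0 < al -> al * (m%:R + n%:R) <= be -> be - al * m%:R <= rho -> 0 <= rho ->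
 al * (m%:R + n%:R) - be <= hfun al be rho m n a b /\
 (~~((a == b) && (a <= 1)%N) -> al * (m%:R+n%:R) - be + rho - al * n%:R <= hfun al be rho m n a b).
Proof.
move=> al0 H1 H2 rho0; rewrite /hfun.
have m0 : 0 <= m%:R :> R by [].
have n0 : 0 <= n%:R :> R by [].
have K : 0 <= rho - be + al * m%:R by lra.
have rn : al * n%:R <= rho by lra.
have alm : 0 <= al * m%:R by apply: mulr_ge0 => //; lra.
have aln : 0 <= al * n%:R by apply: mulr_ge0 => //; lra.
suff F2 : ~~((a == b) && (a <= 1)%N) -> al * (m%:R+n%:R) - be + rho - al * n%:R <= 
   al * (a%:R * m%:R + b%:R * n%:R) - be * a%:R
  + rho * ((a%:R - b%:R)^+2 + (a%:R - 1) * a%:R).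
  split => //.
  case: (boolP ((a == b) && (a <= 1)%N)) => [/andP[/eqP Eab]|/F2]; last by lra.
  by rewrite -Eab; clear F2; case: a {Eab} => [|[|]] //= _; lra.
case: a => [|[|a]].
- case: b => [|c] // _; rewrite -addn1 natrD; set C := c%:R.
  have C0 : 0 <= C by rewrite /C.
  have h1 : 0 <= al * C * n%:R by apply: mulr_ge0 => //; apply: mulr_ge0 => //; lra.
  have h2 : 0 <= rho * C by apply: mulr_ge0.
  have h3 : 0 <= rho * C * C by apply: mulr_ge0 => //; apply: mulr_ge0.
  lra.
- case: b => [|[|c]] // _; first by lra.
  rewrite -addn2 natrD; set C := c%:R.
  have C0 : 0 <= C by rewrite /C.
  have h1 : 0 <= al * C * n%:R by apply: mulr_ge0 => //; apply: mulr_ge0 => //; lra.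
  have h2 : 0 <= rho * C by apply: mulr_ge0.
  have h3 : 0 <= rho * C * C by apply: mulr_ge0 => //; apply: mulr_ge0.
  lra.
- move=> _; rewrite -addn2 natrD; set A := a%:R; set B := b%:R.
  have A0 : 0 <= A by rewrite /A.
  have B0 : 0 <= B by rewrite /B.
  have h1 : 0 <= (A+1)*(rho - be + al * m%:R) by apply: mulr_ge0 => //; lra.
  have h4 : 0 <= al * B * n%:R by apply: mulr_ge0 => //; apply: mulr_ge0 => //; lra.
  have h5 : 0 <= rho * (A + 2%:R - B)^+2 by apply: mulr_ge0 => //; apply: sqr_ge0.
  have h2 : 0 <= rho * A by apply: mulr_ge0.
  have h3 : 0 <= rho * A * A by apply: mulr_ge0 => //; apply: mulr_ge0.
  lra.
Qed.

Lemma Bwmin_le {I : rwap} (w : wpath I) : (Bwmin (wreq w) <= Bw w)%N.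
Proof. by rewrite /Bwmin -minEnat; exact: (@bigmin_le_cond _ nat _ #|link I| w (fun v => wreq v == wreq w) (@Bw I) (eqxx _)). Qed.

Lemma Bpmin_le {I : rwap} (p : ppath I) : (Bpmin (preq p) <= Bp p)%N.
Proof. by rewrite /Bpmin -minEnat; exact: (@bigmin_le_cond _ nat _ #|link I| p (fun v => preq v == preq p) (@Bp I) (eqxx _)). Qed.

Lemma Bw_ge1 {I : rwap} : wf_rwap I -> forall w : wpath I, (1 <= Bw w)%N.
Proof.
case=> [[_ _ _ Hw _] _] w; case/and3P: (Hw w) => Hne _ _.
rewrite /Bw /wE; move: Hne; case: (wlinks w) => [|e s] // _.
by apply/card_gt0P; exists e; rewrite inE mem_head.
Qed.

Lemma Bp_ge1 {I : rwap} : wf_rwap I -> forall p : ppath I, (1 <= Bp p)%N.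
Proof.
case=> [[_ _ _ _ Hp] _] p; case/and3P: (Hp p) => Hne _ _.
rewrite /Bp /pE; move: Hne; case: (plinks p) => [|e s] // _.
by apply/card_gt0P; exists e; rewrite inE mem_head.
Qed.

Lemma Mfacts {I : rwap} : wf_rwap I -> forall r : request I,
  [/\ (Bwmin r + Bpmin r <= Mmax I)%N, (1 + Bpmin r <= Mmax I)%N & (2 <= Mmax I)%N].
Proof.
move=> wf r; have wf' := wf; case: wf' => [[_ Hw Hp _ _] _].
have [w0 Ew] := Hw r; have [p0 Ep] := Hp r.
have HM : (Bw w0 + Bp p0 <= Mmax I)%N.
  apply: leq_trans (leq_bigmax r); apply: leq_add.
    by apply: (leq_bigmax_cond (P := fun w => wreq w == r)); rewrite Ew.
  by apply: (leq_bigmax_cond (P := fun p => preq p == r)); rewrite Ep.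
have h1 := Bw_ge1 wf w0; have h2 := Bp_ge1 wf p0.
have h3 := Bwmin_le w0; have h4 := Bpmin_le p0; rewrite Ew in h3; rewrite Ep in h4.
split; apply: leq_trans HM.
- exact: leq_add.
- exact: leq_add.
- exact: (leq_add h1 h2).
Qed.

Lemma psum_ge0 {R : realFieldType} (A B : finType) (P : A -> B -> bool)
  (f : A -> bool) (g : B -> bool) :
  0 <= \sum_(a : A) \sum_(b : B | P a b) (f a)%:R * (g b)%:R :> R.
Proof. by apply: sumr_ge0 => a _; apply: sumr_ge0 => b _; apply: mulr_ge0. Qed.

Lemma psum_ge1 {R : realFieldType} (A B : finType) (P : A -> B -> bool)
  (f : A -> bool) (g : B -> bool) a b : P a b -> f a -> g b ->
  1 <= \sum_(a : A) \sum_(b : B | P a b) (f a)%:R * (g b)%:R :> R.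
Proof.
move=> Pab fa gb; rewrite (bigD1 a) //= (bigD1 b) //= fa gb mulr1.
have h1 : 0 <= \sum_(b0 | P a b0 && (b0 != b)) (true%:R * (g b0)%:R) :> R.
  by apply: sumr_ge0 => c _; apply: mulr_ge0.
have h2 : 0 <= \sum_(i | i != a) \sum_(b0 | P i b0) ((f i)%:R * (g b0)%:R) :> R.
  by apply: sumr_ge0 => c _; apply: sumr_ge0 => d _; apply: mulr_ge0.
rewrite /= in h1 *; lra.
Qed.

Lemma Qzero {I : rwap} {R : realFieldType} (al be rho : R) :
  Qobj al be rho (fun _ : wpath I => false) (fun _ : ppath I => false) = 0.
Proof.
have X0 : forall r, Xsum (fun _ : wpath I => false) r = 0%N by move=> r; rewrite /Xsum big1.
have Y0 : forall r, Ysum (fun _ : ppath I => false) r = 0%N by move=> r; rewrite /Ysum big1.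
rewrite /Qobj /fobj.
rewrite big1; last by move=> r _; rewrite !big1 // => i _; rewrite muln0.
rewrite big1; last by move=> r _; rewrite X0.
rewrite big1; last by move=> r _; rewrite X0 Y0 subr0 expr2 mulr0.
rewrite big1; last by move=> r _; rewrite X0 mulr0.
rewrite big1; last by move=> w _; rewrite big1 // => p _; rewrite mul0r.
rewrite big1; last by move=> w _; rewrite big1 // => p _; rewrite mul0r.
rewrite big1; last by move=> w _; rewrite big1 // => p _; rewrite mul0r.
rewrite big1; last by move=> w _; rewrite big1 // => p _; rewrite mul0r.
by rewrite !mulr0 !addr0 subrr.
Qed.

Lemma QeqF {I : rwap} {R : realFieldType} (al be rho : R) x y :
  @feasible I x y -> Qobj al be rho x y = fobj al be x y.
Proof.
case=> [[HXY HX1] [H1 H2 H3 H4]]; rewrite /Qobj.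
rewrite big1; last by move=> r _; rewrite HXY subrr expr2 mulr0.
rewrite big1; last first.
  move=> r _; have := HX1 r; case: (Xsum x r) => [|[|]] //= _; first by rewrite mulr0.
  by rewrite subrr mul0r.
rewrite big1; last first.
  move=> w _; rewrite big1 // => p /H1; case: (x w); case: (y p) => //= _; rewrite ?mulr0 ?mul0r //.
rewrite big1; last first.
  move=> w _; rewrite big1 // => p /H2; case: (x w); case: (y p) => //= _; rewrite ?mulr0 ?mul0r //.
rewrite big1; last first.
  move=> w _; rewrite big1 // => p /H3; case: (x w); case: (x p) => //= _; rewrite ?mulr0 ?mul0r //.
rewrite big1; last first.
  move=> w _; rewrite big1 // => p /H4; case: (y w); case: (y p) => //= _; rewrite ?mulr0 ?mul0r //.
by rewrite !mulr0 !addr0.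
Qed.

Lemma Qlow {I : rwap} {R : realFieldType} (al be rho : R) x y : 0 <= al ->
  \sum_(r : request I) hfun al be rho (Bwmin r) (Bpmin r) (Xsum x r) (Ysum y r)
  + rho * ((\sum_(w : wpath I) \sum_(p : ppath I | C1 w p) (x w)%:R * (y p)%:R)
         + (\sum_(w : wpath I) \sum_(p : ppath I | C2 w p) (x w)%:R * (y p)%:R)
         + (\sum_(w1 : wpath I) \sum_(w2 : wpath I | C3 w1 w2) (x w1)%:R * (x w2)%:R)
         + (\sum_(p1 : ppath I) \sum_(p2 : ppath I | C4 p1 p2) (y p1)%:R * (y p2)%:R))
  <= Qobj al be rho x y.
Proof.
move=> al0.
have Hh : \sum_(r : request I) hfun al be rho (Bwmin r) (Bpmin r) (Xsum x r) (Ysum y r)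
  = al * (\sum_(r : request I) ((Xsum x r)%:R * (Bwmin r)%:R + (Ysum y r)%:R * (Bpmin r)%:R))
    - be * (\sum_(r : request I) (Xsum x r)%:R)
    + rho * (\sum_(r : request I) ((Xsum x r)%:R - (Ysum y r)%:R) ^+ 2)
    + rho * (\sum_(r : request I) ((Xsum x r)%:R - 1) * (Xsum x r)%:R).
  rewrite /hfun big_split /= sumrB -!mulr_sumr big_split /= mulrDr.
  by rewrite big_split /= mulrDr !addrA.
have Hf : al * (\sum_(r : request I) ((Xsum x r)%:R * (Bwmin r)%:R + (Ysum y r)%:R * (Bpmin r)%:R))
    - be * (\sum_(r : request I) (Xsum x r)%:R) <= fobj al be x y.
  rewrite /fobj lerD2r; apply: ler_wpM2l => //; apply: ler_sum => r _.
  rewrite -!natrM -natrD ler_nat; apply: leq_add.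
    rewrite /Xsum big_distrl /=; apply: leq_sum => w /eqP <-.
    by case: (x w) => /=; rewrite ?mul1n ?muln1 ?mul0n ?muln0 // Bwmin_le.
  rewrite /Ysum big_distrl /=; apply: leq_sum => p /eqP <-.
  by case: (y p) => /=; rewrite ?mul1n ?muln1 ?mul0n ?muln0 // Bpmin_le.
rewrite /Qobj; lra.
Qed.

Theorem proposition4 (I : rwap) (R : realFieldType) (alpha beta rho : R) :
  wf_rwap I ->
  0 < alpha -> 0 < beta ->
  beta / alpha > (#|request I|%:R * ((Mmax I)%:R - 2) + 2) ->
  rho > beta * (#|request I|%:R + 1)
        - alpha * (1 + \sum_(r : request I) ((Bwmin r)%:R + (Bpmin r)%:R)) ->
  0 < rho ->
  forall (x : wpath I -> bool) (y : ppath I -> bool),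
    (forall (x' : wpath I -> bool) (y' : ppath I -> bool),
        Qobj alpha beta rho x y <= Qobj alpha beta rho x' y') ->
    feasible x y /\
    (forall (x' : wpath I -> bool) (y' : ppath I -> bool),
        feasible x' y' -> fobj alpha beta x y <= fobj alpha beta x' y').
Proof.
move=> wf al0 be0 Hba Hrho rho0 x y Hmin.
have Q0 : Qobj alpha beta rho x y <= 0.
  by rewrite -(@Qzero I R alpha beta rho); exact: Hmin.
have BM : forall r : request I, alpha * (Mmax I)%:R < beta.
  move=> r; have [_ _ M2] := Mfacts wf r.
  have N1 : (0 < #|request I|)%N by apply/card_gt0P; exists r.
  have hN : 1 <= (#|request I|)%:R :> R by rewrite ler1n.
  have hM : 2%:R <= (Mmax I)%:R :> R by rewrite ler_nat.
  move: Hba; rewrite ltr_pdivlMr // => Hba.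
  have h : 0 <= ((#|request I|)%:R - 1) * ((Mmax I)%:R - 2%:R) * alpha.
    apply: mulr_ge0; [apply: mulr_ge0|]; lra.
  lra.
have Hm : forall r : request I,
    alpha * ((Bwmin r)%:R + (Bpmin r)%:R) <= alpha * (Mmax I)%:R.
  move=> r; have [h _ _] := Mfacts wf r.
  by rewrite -natrD ler_wpM2l ?ler_nat // ltW.
have Hn : forall r : request I,
    alpha * (1 + (Bpmin r)%:R) <= alpha * (Mmax I)%:R.
  move=> r; have [_ h _] := Mfacts wf r.
  have : alpha * (1 + Bpmin r)%N%:R <= alpha * (Mmax I)%:R.
    by rewrite ler_wpM2l ?ler_nat // ltW.
  by rewrite natrD mulr1n.
have [P1 P3] : (forall r : request I,
    alpha * ((Bwmin r)%:R + (Bpmin r)%:R) <= beta) /\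
   (forall r : request I, alpha * (1 + (Bpmin r)%:R) < beta).
  split=> r; have := BM r; [have := Hm r | have := Hn r]; clear BM Hm Hn; lra.
clear BM Hm Hn.
have SL : \sum_(r : request I) (alpha * ((Bwmin r)%:R + (Bpmin r)%:R) - beta)
    = alpha * \sum_(r : request I) ((Bwmin r)%:R + (Bpmin r)%:R)
      - beta * (#|request I|)%:R.
  by rewrite sumrB -mulr_sumr sumr_const mulr_natr.
have P4 : beta - alpha <
    \sum_(r : request I) (alpha * ((Bwmin r)%:R + (Bpmin r)%:R) - beta) + rho.
  rewrite SL; lra.
have P2 : forall r : request I, beta - alpha * (Bwmin r)%:R <= rho.
  move=> r.
  have : \sum_(s : request I) (alpha * ((Bwmin s)%:R + (Bpmin s)%:R) - beta)
      <= alpha * ((Bwmin r)%:R + (Bpmin r)%:R) - beta.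
    rewrite (bigD1 r) //=.
    have : \sum_(s | s != r) (alpha * ((Bwmin s)%:R + (Bpmin s)%:R) - beta) <= 0.
      by apply: sumr_le0 => s _; have := P1 s; lra.
    lra.
  have := P3 r; move: P4; lra.
have HB := fun r : request I => @hbound R alpha beta rho _ _ (Xsum x r) (Ysum y r) al0 (P1 r) (P2 r) (ltW rho0).
have Hlow := Qlow alpha beta rho x y (ltW al0).
have T1 := @psum_ge0 R _ _ (@C1 I) x y.
have T2 := @psum_ge0 R _ _ (@C2 I) x y.
have T3 := @psum_ge0 R _ _ (@C3 I) x x.
have T4 := @psum_ge0 R _ _ (@C4 I) y y.
have SH : \sum_(r : request I) (alpha * ((Bwmin r)%:R + (Bpmin r)%:R) - beta)
   <= \sum_(r : request I) hfun alpha beta rho (Bwmin r) (Bpmin r) (Xsum x r) (Ysum y r).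
  by apply: ler_sum => r _; exact: (HB r).1.
have Tn := mulr_ge0 (ltW rho0) (addr_ge0 (addr_ge0 (addr_ge0 T1 T2) T3) T4).
have bad : forall r : request I, ~~((Xsum x r == Ysum y r) && (Xsum x r <= 1)%N) ->
    0 < Qobj alpha beta rho x y.
  move=> r Hr.
  have : \sum_(r : request I) (alpha * ((Bwmin r)%:R + (Bpmin r)%:R) - beta)
      + rho - alpha * (Bpmin r)%:R
      <= \sum_(r : request I) hfun alpha beta rho (Bwmin r) (Bpmin r) (Xsum x r) (Ysum y r).
    rewrite (bigD1 r) //= [X in _ <= X](bigD1 r) //=.
    have := (HB r).2 Hr.
    have : \sum_(s | s != r) (alpha * ((Bwmin s)%:R + (Bpmin s)%:R) - beta)
       <= \sum_(s | s != r) hfun alpha beta rho (Bwmin s) (Bpmin s) (Xsum x s) (Ysum y s).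
      by apply: ler_sum => s _; exact: (HB s).1.
    lra.
  have := P3 r; move: P4 Hlow Tn; lra.
have badT : alpha < beta ->
    1 <= (\sum_(w : wpath I) \sum_(p : ppath I | C1 w p) (x w)%:R * (y p)%:R)
         + (\sum_(w : wpath I) \sum_(p : ppath I | C2 w p) (x w)%:R * (y p)%:R)
         + (\sum_(w1 : wpath I) \sum_(w2 : wpath I | C3 w1 w2) (x w1)%:R * (x w2)%:R)
         + (\sum_(p1 : ppath I) \sum_(p2 : ppath I | C4 p1 p2) (y p1)%:R * (y p2)%:R) :> R ->
    0 < Qobj alpha beta rho x y.
  move=> ab H1.
  have Tn1 : 0 <= rho * ((\sum_(w : wpath I) \sum_(p : ppath I | C1 w p) (x w)%:R * (y p)%:R)
         + (\sum_(w : wpath I) \sum_(p : ppath I | C2 w p) (x w)%:R * (y p)%:R)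
         + (\sum_(w1 : wpath I) \sum_(w2 : wpath I | C3 w1 w2) (x w1)%:R * (x w2)%:R)
         + (\sum_(p1 : ppath I) \sum_(p2 : ppath I | C4 p1 p2) (y p1)%:R * (y p2)%:R) - 1).
    by apply: (mulr_ge0 (ltW rho0)); rewrite subr_ge0.
  move: P4 Hlow SH Tn1; lra.
have ab : forall r : request I, 0 <= alpha * (Bpmin r)%:R.
  by move=> r; apply: mulr_ge0 => //; exact: ltW.
have feas : feasible x y.
  split; split.
  - move=> r; case: (boolP ((Xsum x r == Ysum y r) && (Xsum x r <= 1)%N)) => [/andP[/eqP -> _] //|/bad].
    by rewrite ltNge Q0.
  - move=> r; case: (boolP ((Xsum x r == Ysum y r) && (Xsum x r <= 1)%N)) => [/andP[_ ->] //|/bad].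
    by rewrite ltNge Q0.
  - move=> w p Hc; case Ex: (x w); case Ey: (y p) => //=.
    suff : 0 < Qobj alpha beta rho x y by rewrite ltNge Q0.
    apply: badT; first by have := ab (wreq w); have := P3 (wreq w); lra.
    have := @psum_ge1 R _ _ (@C1 I) x y w p Hc Ex Ey.
    move: T2 T3 T4; lra.
  - move=> w p Hc; case Ex: (x w); case Ey: (y p) => //=.
    suff : 0 < Qobj alpha beta rho x y by rewrite ltNge Q0.
    apply: badT; first by have := ab (wreq w); have := P3 (wreq w); lra.
    have := @psum_ge1 R _ _ (@C2 I) x y w p Hc Ex Ey.
    move: T1 T3 T4; lra.
  - move=> w p Hc; case Ex: (x w); case Ey: (x p) => //=.
    suff : 0 < Qobj alpha beta rho x y by rewrite ltNge Q0.
    apply: badT; first by have := ab (wreq w); have := P3 (wreq w); lra.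
    have := @psum_ge1 R _ _ (@C3 I) x x w p Hc Ex Ey.
    move: T1 T2 T4; lra.
  - move=> w p Hc; case Ex: (y w); case Ey: (y p) => //=.
    suff : 0 < Qobj alpha beta rho x y by rewrite ltNge Q0.
    apply: badT; first by have := ab (preq w); have := P3 (preq w); lra.
    have := @psum_ge1 R _ _ (@C4 I) y y w p Hc Ex Ey.
    move: T1 T2 T3; lra.
split => // x' y' F'.
rewrite -(QeqF alpha beta rho x y feas) -(QeqF alpha beta rho x' y' F'); exact: Hmin.
Qed.
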